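(* Let $R$ be an arithmetic ring, $M$ a finitely generated $R$-module, and $\{0\}=M_0\subset M_1\subset\dots\subset M_n=M$ a pure-composition series of $M$ with $M_i/M_{i-1}=R(x_i+M_{i-1})$ for $1\le i\le n$, whose annihilator sequence $(A_i)_{1\le i\le n}$, $A_i=\mathrm{ann}(M_i/M_{i-1})$, is increasing ($A_1\subseteq\dots\subseteq A_n$). If $c_1,\dots,c_n\in R$ satisfy $\sum_{i=1}^n c_ix_i=0$, then $c_i\in A_n$ for every $i$.
   Context: All rings are commutative with identity. $R$ is arithmetic if $R_P$ is a valuation ring for every maximal ideal $P$. A submodule is pure if its inclusion stays injective after tensoring with any module; a pure-composition series is a finite chain of pure submodules from $0$ to $M$. *)

(* Defs.v *)
From mathcomp Require Import all_boot all_order all_algebra.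
Set Implicit Arguments. Unset Strict Implicit. Unset Printing Implicit Defensive.
Import GRing.Theory.
Local Open Scope ring_scope.

Section Defs.
Variable R : comPzRingType.

Definition is_ideal (I : R -> Prop) : Prop :=
  [/\ I 0, (forall a b, I a -> I b -> I (a + b)) & (forall r a, I a -> I (r * a))].

Definition is_maximal_ideal (P : R -> Prop) : Prop :=
  [/\ is_ideal P, ~ P 1 &
      forall J, is_ideal J -> (forall a, P a -> J a) -> J 1 \/ (forall a, J a -> P a)].

(** R_P is a valuation ring (= chain ring: its (principal) ideals are totally
    ordered).  Unfolded in terms of R: for a, b in R, a/1 divides b/1 in R_P
    iff s*b = r*a for some r in R and s notin P. *)
Definition local_valuation (P : R -> Prop) : Prop :=
  forall a b : R, exists s r : R, ~ P s /\ (s * b = r * a \/ s * a = r * b).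

Definition arithmetic : Prop :=
  forall P, is_maximal_ideal P -> local_valuation P.

Variable M : lmodType R.

Definition fin_gen : Prop :=
  exists s : seq M, forall m : M, exists r : 'I_(size s) -> R,
    m = \sum_(i < size s) r i *: s`_i.

Definition submod (N : M -> Prop) : Prop :=
  [/\ N 0, (forall x y, N x -> N y -> N (x + y)) & (forall r x, N x -> N (r *: x))].

(** Tensor products, presented as the free abelian group on pairs modulo the
    bilinearity/balancing relations. For a submodule N of M (given by a
    predicate), an element sum_i n_i (x) a_i of N (x)_R A is represented by a
    list of pairs (n_i, a_i) with n_i in N. *)
Inductive tgen (A : lmodType R) :=
  | TG_addl of M & M & A
  | TG_addr of M & A & A
  | TG_scal of R & M & A.

Definition tgen_expand (A : lmodType R) (g : tgen A) : seq (int * (M * A)) :=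
  match g with
  | TG_addl x x' a => [:: (1%Z, (x + x', a)); ((-1)%Z, (x, a)); ((-1)%Z, (x', a))]
  | TG_addr x a a' => [:: (1%Z, (x, a + a')); ((-1)%Z, (x, a)); ((-1)%Z, (x, a'))]
  | TG_scal r x a => [:: (1%Z, (r *: x, a)); ((-1)%Z, (x, r *: a))]
  end.

Definition tgen_in (A : lmodType R) (N : M -> Prop) (g : tgen A) : Prop :=
  match g with
  | TG_addl x x' _ => N x /\ N x'
  | TG_addr x _ _ => N x
  | TG_scal _ x _ => N x
  end.

Fixpoint all_Prop (T : Type) (P : T -> Prop) (s : seq T) : Prop :=
  if s is a :: s' then P a /\ all_Prop P s' else True.

Definition fcoef (T : eqType) (s : seq (int * T)) (p : T) : int :=
  \sum_(q <- s | q.2 == p) q.1.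

(** sum_i n_i (x) a_i = 0 in N (x)_R A *)
Definition tensor_zero (A : lmodType R) (N : M -> Prop) (s : seq (M * A)) : Prop :=
  exists gs : seq (int * tgen A),
    all_Prop (fun g => tgen_in N g.2) gs /\
    forall p : M * A,
      fcoef [seq (1%Z, q) | q <- s] p = \sum_(g <- gs) g.1 * fcoef (tgen_expand g.2) p.

(** N is pure in M: N (x) A -> M (x) A is injective for every R-module A. *)
Definition pure (N : M -> Prop) : Prop :=
  forall (A : lmodType R) (s : seq (M * A)),
    (forall q, q \in s -> N q.1) ->
    tensor_zero (fun _ => True) s -> tensor_zero N s.

Definition pure_comp_series (Ms : nat -> M -> Prop) (n : nat) : Prop :=
  [/\ (forall m, Ms 0%N m <-> m = 0),
      (forall m, Ms n m),
      (forall i, (i < n)%N -> forall m, Ms i m -> Ms i.+1 m) &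
      (forall i, (i <= n)%N -> submod (Ms i) /\ pure (Ms i))].

Definition cyclic_quot (N N' : M -> Prop) (x : M) : Prop :=
  N' x /\ forall m, N' m -> exists r : R, N (m - r *: x).

Definition ann_quot (N N' : M -> Prop) (r : R) : Prop :=
  forall m, N' m -> N (r *: m).

End Defs.

(* Main.v *)
From HB Require Import structures.
From mathcomp Require Import all_boot all_order all_algebra.
Require Import Defs.
From mathcomp Require Import generic_quotient ring_quotient boolp.
Set Implicit Arguments. Unset Strict Implicit.
Import GRing.Theory.
Local Open Scope ring_scope.
Local Open Scope quotient_scope.

Section Q.
Variables (R : comPzRingType) (a : R).

Definition aI : {pred R} := fun x => `[< exists r, x = a * r >].

Lemma aIP x : reflect (exists r, x = a * r) (x \in aI).
Proof. exact: asboolP. Qed.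

Lemma aI_zmod : zmod_closed aI.
Proof.
split; first by apply/aIP; exists 0; rewrite mulr0.
move=> u v /aIP[r ->] /aIP[s ->]; apply/aIP; exists (r - s); by rewrite mulrBr.
Qed.

HB.instance Definition _ := GRing.isZmodClosed.Build R aI aI_zmod.

Lemma aIM r u : u \in aI -> r * u \in aI.
Proof. move=> /aIP[t ->]; apply/aIP; exists (r * t); by rewrite mulrCA. Qed.

Definition QA := Quotient.quot aI.
HB.instance Definition _ := GRing.Zmodule.on QA.

Definition qpi (r : R) : QA := \pi_(Quotient.quot aI) r.
Definition qrep (q : QA) : R := repr (q : Quotient.quot aI).

Lemma qpiD u v : qpi (u + v) = qpi u + qpi v.
Proof. exact: (raddfD (\pi_(Quotient.quot aI))). Qed.

Lemma qpiE u v : (qpi u = qpi v) <-> (u - v \in aI).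
Proof.
rewrite (Quotient.idealrBE aI); split => [h|/eqP h]; [by apply/eqP | exact: h].
Qed.

Lemma qrepK q : qpi (qrep q) = q.
Proof. exact: reprK. Qed.

Lemma qrepI u : qrep (qpi u) - u \in aI.
Proof. by apply/qpiE; rewrite qrepK. Qed.

Definition qscale (r : R) (q : QA) : QA := qpi (r * qrep q).

Lemma qscaleA r s v : qscale r (qscale s v) = qscale (r * s) v.
Proof.
rewrite /qscale; apply/qpiE; rewrite -mulrA -mulrBr; apply: aIM; exact: qrepI.
Qed.

Lemma qscale1 v : qscale 1 v = v.
Proof. by rewrite /qscale mul1r qrepK. Qed.

Lemma qscaleDr r u v : qscale r (u + v) = qscale r u + qscale r v.
Proof.
rewrite /qscale -qpiD; apply/qpiE; rewrite -mulrDr -mulrBr; apply: aIM.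
apply/qpiE; by rewrite qpiD !qrepK.
Qed.

Lemma qscaleDl v r s : qscale (r + s) v = qscale r v + qscale s v.
Proof. by rewrite /qscale -qpiD mulrDl. Qed.

HB.instance Definition _ := GRing.Zmodule_isLmodule.Build R QA qscaleA qscale1 qscaleDr qscaleDl.

Lemma qscaleE r q : r *: q = qpi (r * qrep q). Proof. by []. Qed.

End Q.
Section Sums.
Variables (T : eqType) (G : zmodType) (phi : T -> G).

Definition Fs (L : seq (int * T)) : G := \sum_(e <- L) phi e.2 *~ e.1.

Lemma Fs_U L U : uniq U -> {subset map snd L <= U} ->
  Fs L = \sum_(p <- U) phi p *~ fcoef L p.
Proof.
move=> uU; elim: L => [|e L IH] sub.
  rewrite /Fs big_nil big1 // => p _; by rewrite /fcoef big_nil mulr0z.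
have eU : e.2 \in U by apply: sub; rewrite inE eqxx.
rewrite /Fs big_cons -/(Fs L) IH; last by move=> q hq; apply: sub; rewrite inE hq orbT.
rewrite (bigD1_seq e.2) //= [in RHS](bigD1_seq e.2) //=.
rewrite /fcoef big_cons eqxx mulrzDr addrA; congr (_ + _).
apply: eq_bigr => p hp; rewrite big_cons eq_sym (negPf hp) //.
Qed.


Lemma Fs_comb L (gs : seq (int * seq (int * T))) :
  (forall p, fcoef L p = \sum_(g <- gs) g.1 * fcoef (g.2) p) ->
  Fs L = \sum_(g <- gs) Fs (g.2) *~ g.1.
Proof.
move=> h.
set U := undup (map snd L ++ flatten [seq map snd (g.2) | g <- gs]).
have uU : uniq U by apply: undup_uniq.
rewrite (@Fs_U _ U uU); last by move=> q hq; rewrite mem_undup mem_cat hq.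
under eq_bigr do rewrite h mulrz_sumr.
rewrite exchange_big /=; apply: eq_big_seq => g gin.
rewrite (@Fs_U _ U uU); last first.
  move=> q hq; rewrite mem_undup mem_cat; apply/orP; right.
  by apply/flatten_mapP; exists g.
rewrite mulrz_suml; apply: eq_bigr => p _; by rewrite mulrzA_C.
Qed.
End Sums.

Section RD.
Variables (R : comPzRingType) (M : lmodType R) (N : M -> Prop).
Hypotheses (subN : submod N) (pureN : pure N).
Variable a : R.

Definition Pa (v : M) := exists u, N u /\ v = a *: u.

Lemma NZ r u : N u -> N (r *: u).
Proof. by case: subN => _ _; apply. Qed.
Lemma ND u v : N u -> N v -> N (u + v).
Proof. by case: subN => _ h _; apply: h. Qed.
Lemma N0 : N 0.
Proof. by case: subN. Qed.

Lemma Pa0 : Pa 0.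
Proof. exists 0; split; [exact: N0 | by rewrite scaler0]. Qed.
Lemma PaD v w : Pa v -> Pa w -> Pa (v + w).
Proof. move=> [u [Nu ->]] [u' [Nu' ->]]; exists (u + u'); split; [exact: ND|by rewrite scalerDr]. Qed.
Lemma Paz v k : Pa v -> Pa (v *~ k).
Proof.
move=> [u [Nu ->]]; exists (u *~ k); split; last by rewrite scalerMzr.
by rewrite -scaler_int; apply: NZ.
Qed.
Lemma PaN v : Pa v -> Pa (- v).
Proof. by move=> h; rewrite -mulrN1z; apply: Paz. Qed.
Lemma PaI u x : u \in aI a -> N x -> Pa (u *: x).
Proof. move=> /aIP[t ->] Nx; exists (t *: x); split; [exact: NZ | by rewrite scalerA]. Qed.

Definition phiA (p : M * QA a) : M := qrep p.2 *: p.1.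

Lemma Pa_gen (g : tgen M (QA a)) : tgen_in N g ->
  Pa (Fs phiA (tgen_expand g)).
Proof.
case: g => [x x' al|x al al'|r x al] /=; rewrite /Fs !big_cons big_nil /phiA /=
  ?mulr1z ?mulrN1z ?addr0.
- move=> _; rewrite scalerDr -opprD subrr; exact: Pa0.
- move=> Nx; rewrite -!scaleNr -!scalerDl; apply: PaI => //.
  rewrite -opprD; apply/qpiE; by rewrite qpiD !qrepK.
- move=> Nx; rewrite qscaleE scalerA -scaleNr -scalerDl; apply: PaI => //.
  rewrite mulrC -opprB rpredN; exact: qrepI.
Qed.

Lemma RD y z : N y -> y = a *: z -> Pa y.
Proof.
move=> Ny yz.
pose s : seq (M * QA a) := [:: (y, qpi a 1)].
have tz : tensor_zero (fun _ => True) s.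
  exists [:: (1%Z, TG_scal a z (qpi a 1)); ((-1)%Z, TG_addr z 0 0)]; split => //.
  have h0 : a *: qpi a 1 = 0.
    rewrite qscaleE -(raddf0 (\pi_(Quotient.quot (aI a)))) -/(qpi a 0).
    apply/qpiE; rewrite subr0; apply/aIP; by exists (qrep (qpi a 1)).
  move=> p; rewrite /fcoef /= !big_cons !big_nil /= ?addr0 yz h0.
  by do 2 case: (_ == p).
have [gs [gN geq]] : tensor_zero N s.
  apply: pureN tz => q; rewrite inE => /eqP -> /=; exact: Ny.
have key : Fs phiA [seq (1%Z, q) | q <- s] =
  \sum_(g <- [seq (g.1, tgen_expand g.2) | g <- gs]) Fs phiA g.2 *~ g.1.
  by apply: Fs_comb => p; rewrite geq big_map.
have PR : Pa (\sum_(g <- [seq (g.1, tgen_expand g.2) | g <- gs]) Fs phiA g.2 *~ g.1).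
  rewrite big_map; elim: gs gN {geq key} => [_|g gs IH [hg hgs]];
    rewrite ?big_nil ?big_cons; first exact: Pa0.
  apply: PaD; [apply: Paz; exact: Pa_gen | exact: IH].
move: PR; rewrite -key /Fs /= big_cons big_nil /phiA /= mulr1z addr0 => PR.
have -> : y = qrep (qpi a 1) *: y + - ((qrep (qpi a 1) - 1) *: y).
  by rewrite scalerBl scale1r opprB addrC subrK.
apply: PaD PR _; apply: PaN; apply: PaI Ny; exact: qrepI.
Qed.
End RD.

Theorem lemma3p2 (R : comPzRingType) (M : lmodType R) (n : nat)
    (Ms : nat -> M -> Prop) (x : nat -> M) (c : nat -> R) :
  arithmetic R ->
  fin_gen M ->
  pure_comp_series Ms n ->
  (forall i, (1 <= i <= n)%N -> cyclic_quot (Ms i.-1) (Ms i) (x i)) ->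
  (forall i j, (1 <= i)%N -> (i <= j)%N -> (j <= n)%N ->
     forall r, ann_quot (Ms i.-1) (Ms i) r -> ann_quot (Ms j.-1) (Ms j) r) ->
  \sum_(1 <= i < n.+1) c i *: x i = 0 ->
  forall i, (1 <= i <= n)%N -> ann_quot (Ms n.-1) (Ms n) (c i).
Proof.
move=> _ _ [H0 Hn Hmono Hsp] Hcyc Hann.
have sub k : (k <= n)%N -> submod (Ms k) by move=> kn; case: (Hsp k kn).
have pur k : (k <= n)%N -> pure (Ms k) by move=> kn; case: (Hsp k kn).
have mono i j : (i <= j)%N -> (j <= n)%N -> forall m, Ms i m -> Ms j m.
  move=> ij jn m; elim: j ij jn => [|j IH] ij jn.
    by rewrite leqn0 in ij; move/eqP: ij => ->.
  rewrite leq_eqVlt in ij; case/orP: ij => [/eqP -> //|ij] hm.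
  apply: Hmono => //; apply: IH => //; exact: ltnW.
have xin i : (1 <= i <= n)%N -> Ms i (x i) by move=> hi; case: (Hcyc i hi).
have sumin k r : (k <= n)%N -> Ms k (\sum_(1 <= i < k.+1) r i *: x i).
  move=> kn; rewrite big_nat; apply: (@big_ind _ (Ms k)).
  - exact: N0 (sub k kn).
  - by move=> u v; apply: (ND (sub k kn)).
  move=> i /andP[i1 ik]; apply: (NZ (sub k kn)).
  apply: (mono i) => //; last by apply: xin; rewrite i1 /=; apply: leq_trans kn.
have span k : (k <= n)%N -> forall m, Ms k m ->
    exists r : nat -> R, m = \sum_(1 <= i < k.+1) r i *: x i.
  elim: k => [_ m /H0 ->|k IH kn m hm].
    by exists (fun _ => 0); rewrite big_geq.
  have [_ /(_ m hm) [r hr]] := Hcyc k.+1 kn.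
  have [r' hr'] := IH (ltnW kn) _ hr.
  exists (fun i => if i == k.+1 then r else r' i).
  rewrite big_nat_recr //= eqxx -(subrK (r *: x k.+1) m) hr'; congr (_ + _).
  apply: eq_big_nat => i /andP[_ ik]; by rewrite ltn_eqF.
have annB k u v : (1 <= k <= n)%N -> ann_quot (Ms k.-1) (Ms k) u ->
    ann_quot (Ms k.-1) (Ms k) v -> ann_quot (Ms k.-1) (Ms k) (u - v).
  move=> /andP[k1 kn] hu hv m hm; rewrite scalerBl.
  have sk := sub k.-1 (leq_trans (leq_pred k) kn).
  apply: (ND sk); [exact: hu | rewrite -scaleN1r; apply: (NZ sk); exact: hv].
have annM k r u : (1 <= k <= n)%N -> ann_quot (Ms k.-1) (Ms k) u ->
    ann_quot (Ms k.-1) (Ms k) (r * u).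
  move=> /andP[k1 kn] hu m hm; rewrite -scalerA.
  have sk := sub k.-1 (leq_trans (leq_pred k) kn).
  apply: (NZ sk); exact: hu.
suff claim : forall k, (k <= n)%N -> forall c : nat -> R,
    \sum_(1 <= i < k.+1) c i *: x i = 0 ->
    forall i, (1 <= i <= k)%N -> ann_quot (Ms k.-1) (Ms k) (c i).
  by move=> hs i hi; apply: claim hs i hi.
elim=> [_ c' _ i /andP[i1 i0]|k IH Kn c' hs i /andP[i1 iK]].
  by rewrite leqn0 in i0; move/eqP: i0 i1 => ->.
have kn : (k <= n)%N := ltnW Kn.
have K1 : (1 <= k.+1 <= n)%N by rewrite Kn.
rewrite big_nat_recr //= in hs.
set S := \sum_(1 <= i < k.+1) c' i *: x i in hs.
have Sk : Ms k S by apply: sumin.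
have yk : Ms k (c' k.+1 *: x k.+1).
  have -> : c' k.+1 *: x k.+1 = - S by apply/eqP; rewrite -addr_eq0 addrC hs.
  rewrite -scaleN1r; exact: (NZ (sub k kn)).
have cK : ann_quot (Ms k) (Ms k.+1) (c' k.+1).
  move=> m hm; have [_ /(_ m hm) [r hr]] := Hcyc k.+1 K1.
  rewrite -(subrK (r *: x k.+1) m) scalerDr scalerA mulrC -scalerA.
  apply: (ND (sub k kn)); [exact: (NZ (sub k kn)) | exact: (NZ (sub k kn))].
have [u [uk yu]] := RD (sub k kn) (pur k kn) yk (erefl _).
have [r hr] := span k kn u uk.
have hs' : \sum_(1 <= i < k.+1) (c' i + c' k.+1 * r i) *: x i = 0.
  under eq_bigr do rewrite scalerDl -scalerA.
  by rewrite big_split /= -scaler_sumr -hr -yu.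
case: (eqVneq i k.+1) => [-> //|ne].
have ik : (i <= k)%N by rewrite -ltnS ltn_neqAle ne.
have k1 : (1 <= k)%N := leq_trans i1 ik.
have h1 := IH kn _ hs' i; rewrite i1 ik in h1; have {}h1 := h1 isT.
have h2 : ann_quot (Ms k) (Ms k.+1) (c' i + c' k.+1 * r i).
  by apply: (Hann k k.+1) => //; exact: h1.
have -> : c' i = (c' i + c' k.+1 * r i) - c' k.+1 * r i by rewrite addrK.
apply: (annB k.+1 _ _ K1 h2); rewrite mulrC; exact: (annM k.+1 _ _ K1 cK).
Qed.
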